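(* Let $\alpha\in(0,1)$, $\psi(s)=s^{-\alpha}$ for $s>0$, $\psi(0)=0$, and $\Psi(s):=\frac{1}{1-\alpha}s^{1-\alpha}$. Let $\phi:[0,\infty)\to\mathbb{R}$ be a solution of $\ddot\phi(t)=-2\dot\phi(t)\psi(|\phi(t)|)$ with $\phi(0)>0$ and $\dot\phi(0)\in\mathbb{R}$. Then the following are equivalent: (1) there exists a time $t_0<\infty$ such that $\phi(t_0)=\dot\phi(t_0)=0$; (2) the initial data satisfy $\dot\phi(0)=-2\Psi(\phi(0))$.
   Context: This equation describes two particles $x_1,x_2$ on a line ($d=1$) governed by the Cucker–Smale system $\dot x_i=v_i$, $\dot v_i=\frac12\sum_{k=1}^2(v_k-v_i)\psi(|x_k-x_i|)$, normalized so that $x_1\equiv -x_2$, $v_1\equiv -v_2$, with $\phi=x_2-x_1$. A solution is understood in the piecewise weak sense: $\phi\in C^1([0,\infty))$, and on every compact subinterval of an interval between consecutive zeros (collision times) of $\phi$, $\phi$ belongs to $W^{2,1}$ and satisfies the equation weakly; once $\phi$ and $\dot\phi$ vanish simultaneously the particles are stuck and $\phi\equiv 0$ afterwards. *)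

(* Defs.v *)
From Stdlib Require Import Reals.
From Coquelicot Require Import Coquelicot.
Open Scope R_scope.

Definition psi (alpha s : R) : R := if Rlt_dec 0 s then Rpower s (- alpha) else 0.

Definition Psi (alpha s : R) : R := / (1 - alpha) * Rpower s (1 - alpha).

(* phi is C^1 on [0,oo) with derivative dphi (one-sided derivative at 0,
   continuity of dphi within [0,oo)). Values for t < 0 are irrelevant. *)
Definition C1_on_nonneg (phi dphi : R -> R) : Prop :=
  (forall t, 0 < t -> is_derive phi t (dphi t)) /\
  filterlim (fun h => (phi h - phi 0) / h) (at_right 0) (locally (dphi 0)) /\
  (forall t, 0 <= t ->
     filterlim dphi (within (fun s => 0 <= s) (locally t)) (locally (dphi t))).

(* Piecewise weak solution of  phi'' = -2 phi' psi(|phi|)  on [0,oo):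
   - phi in C^1([0,oo));
   - on every compact interval [a,b] of [0,oo) on which phi does not vanish
     (i.e. every compact subinterval of an interval between consecutive zeros),
     phi' is absolutely continuous with derivative -2 phi' psi(|phi|), written
     in integrated form  phi'(b) - phi'(a) = int_a^b -2 phi' psi(|phi|);
   - sticking: once phi and phi' vanish simultaneously, phi = 0 afterwards. *)
Definition CS_solution (alpha : R) (phi dphi : R -> R) : Prop :=
  C1_on_nonneg phi dphi /\
  (forall a b, 0 <= a -> a <= b ->
     (forall s, a <= s <= b -> phi s <> 0) ->
     is_RInt (fun s => -2 * dphi s * psi alpha (Rabs (phi s))) a b
             (dphi b - dphi a)) /\
  (forall t, 0 <= t -> phi t = 0 -> dphi t = 0 ->
     forall s, t <= s -> phi s = 0).

(* Main.v *)
Require Import Defs.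
From Stdlib Require Import Reals Lra.
From Coquelicot Require Import Coquelicot.
Open Scope R_scope.

Definition contAt (f:R->R) x := forall eps, 0<eps -> exists d, 0<d /\
  forall t, Rabs (t - x) < d -> Rabs (f t - f x) < eps.
Definition limP (P : R -> R -> Prop) (f : R -> R) L := forall eps, 0<eps ->
  exists d, 0<d /\ forall t, P d t -> Rabs (f t - L) < eps.
Definition RR u d t := u < t < u + d.
Definition LL u d t := u - d < t < u.

Lemma cont_contAt f x : continuous f x -> contAt f x.
Proof.
  intros H eps He.
  destruct (proj1 (filterlim_locally _ _) H (mkposreal eps He)) as [d Hd].
  exists d; split; [apply cond_pos|]. intros t Ht. apply (Hd t). exact Ht.
Qed.

Lemma contAt_RR f x : contAt f x -> limP (RR x) f (f x).
Proof.
  intros H eps He; destruct (H eps He) as [d [Hd Hf]]; exists d; split; auto.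
  intros t [H1 H2]; apply Hf; rewrite Rabs_pos_eq; lra.
Qed.

Lemma contAt_LL f x : contAt f x -> limP (LL x) f (f x).
Proof.
  intros H eps He; destruct (H eps He) as [d [Hd Hf]]; exists d; split; auto.
  intros t [H1 H2]; apply Hf; rewrite Rabs_left; lra.
Qed.

Lemma RR_mono u d d' t : d <= d' -> RR u d t -> RR u d' t.
Proof. unfold RR; lra. Qed.
Lemma LL_mono u d d' t : d <= d' -> LL u d t -> LL u d' t.
Proof. unfold LL; lra. Qed.

Lemma limP_plus P f g L1 L2 : (forall d d' t, d <= d' -> P d t -> P d' t) ->
  limP P f L1 -> limP P g L2 -> limP P (fun t => f t + g t) (L1 + L2).
Proof.
  intros Hm Hf Hg eps He.
  destruct (Hf (eps/2)) as [d1 [Hd1 H1]]; [lra|].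
  destruct (Hg (eps/2)) as [d2 [Hd2 H2]]; [lra|].
  exists (Rmin d1 d2); split; [apply Rmin_pos; auto|].
  intros t Ht.
  assert (A := H1 t (Hm _ _ _ (Rmin_l d1 d2) Ht)).
  assert (B := H2 t (Hm _ _ _ (Rmin_r d1 d2) Ht)).
  replace (f t + g t - (L1 + L2)) with ((f t - L1) + (g t - L2)) by ring.
  eapply Rle_lt_trans; [apply Rabs_triang|]. lra.
Qed.

Lemma limP_opp P f L : limP P f L -> limP P (fun t => - f t) (- L).
Proof.
  intros H eps He; destruct (H eps He) as [d [Hd Hf]]; exists d; split; auto.
  intros t Ht. replace (- f t - - L) with (- (f t - L)) by ring.
  rewrite Rabs_Ropp; auto.
Qed.

Lemma limP_comp P g h L : limP P g L -> contAt h L -> limP P (fun t => h (g t)) (h L).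
Proof.
  intros Hg Hh eps He. destruct (Hh eps He) as [d1 [Hd1 H1]].
  destruct (Hg d1 Hd1) as [d [Hd H]]. exists d; split; auto.
Qed.

Lemma limP_ext P f g L : (forall t, f t = g t) -> limP P f L -> limP P g L.
Proof. intros E H eps He; destruct (H eps He) as [d [Hd Hf]]; exists d; split; auto.
  intros t Ht; rewrite <- E; auto. Qed.

Lemma limRR_uniq f u L K d0 : limP (RR u) f L -> 0 < d0 ->
  (forall t, u < t < u + d0 -> f t = K) -> K = L.
Proof.
  intros H Hd0 HK. destruct (Req_dec K L) as [|n]; auto.
  assert (Hp : 0 < Rabs (K - L)) by (apply Rabs_pos_lt; lra).
  destruct (H _ Hp) as [d [Hd Hf]].
  assert (Hm := Rmin_pos d d0 Hd Hd0).
  assert (Hm1 := Rmin_l d d0). assert (Hm2 := Rmin_r d d0).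
  set (t := u + Rmin d d0 / 2).
  assert (A := Hf t ltac:(unfold RR, t; lra)).
  rewrite HK in A by (unfold t; lra). lra.
Qed.

Lemma limLL_uniq f u L K d0 : limP (LL u) f L -> 0 < d0 ->
  (forall t, u - d0 < t < u -> f t = K) -> K = L.
Proof.
  intros H Hd0 HK. destruct (Req_dec K L) as [|n]; auto.
  assert (Hp : 0 < Rabs (K - L)) by (apply Rabs_pos_lt; lra).
  destruct (H _ Hp) as [d [Hd Hf]].
  assert (Hm := Rmin_pos d d0 Hd Hd0).
  assert (Hm1 := Rmin_l d d0). assert (Hm2 := Rmin_r d d0).
  set (t := u - Rmin d d0 / 2).
  assert (A := Hf t ltac:(unfold LL, t; lra)).
  rewrite HK in A by (unfold t; lra). lra.
Qed.

Lemma Rpower_pos x y : 0 < Rpower x y.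
Proof. unfold Rpower; apply exp_pos. Qed.

Lemma Rpower_deriv x p : 0 < x -> is_derive (fun y => Rpower y p) x (p * Rpower x (p - 1)).
Proof. intros H; apply is_derive_Reals; apply derivable_pt_lim_power; auto. Qed.

Lemma Rpower_cont x p : 0 < x -> continuous (fun y => Rpower y p) x.
Proof. intros H; apply (ex_derive_continuous (K:=R_AbsRing) (V:=R_NormedModule)); eexists; apply Rpower_deriv; auto. Qed.

Lemma Psi_deriv a y : 0 < a < 1 -> 0 < y -> is_derive (Psi a) y (Rpower y (- a)).
Proof.
  intros Ha Hy. unfold Psi.
  replace (Rpower y (- a)) with (/ (1 - a) * ((1 - a) * Rpower y (1 - a - 1))).
  - apply is_derive_scal. apply Rpower_deriv; auto.
  - replace (1 - a - 1) with (- a) by ring. field. lra.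
Qed.

Lemma PsiC a x : 0 < a < 1 -> 0 < x -> contAt (fun y => 2 * Psi a y) x.
Proof.
  intros Ha Hx. apply cont_contAt. apply (ex_derive_continuous (K:=R_AbsRing) (V:=R_NormedModule)).
  eexists. apply is_derive_scal. apply Psi_deriv; auto.
Qed.

Lemma Psi0 a : 0 < a < 1 -> forall eps, 0 < eps -> exists d, 0 < d /\
  forall x, 0 < x < d -> Rabs (2 * Psi a x) < eps.
Proof.
  intros Ha eps He.
  exists (Rpower (eps * (1 - a) / 2) (/ (1 - a))). split; [apply Rpower_pos|].
  intros x [H1 H2]. unfold Psi.
  assert (A : Rpower x (1 - a) < eps * (1 - a) / 2).
  { replace (eps * (1 - a) / 2) with
      (Rpower (Rpower (eps * (1 - a) / 2) (/ (1 - a))) (1 - a)).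
    - apply Rlt_Rpower_l; [lra|]; split; auto.
    - rewrite Rpower_mult. replace (/ (1 - a) * (1 - a)) with 1 by (field; lra).
      apply Rpower_1. apply Rmult_lt_0_compat; [|lra]. apply Rmult_lt_0_compat; lra. }
  assert (B := Rpower_pos x (1 - a)).
  assert (C : 0 < / (1 - a)) by (apply Rinv_0_lt_compat; lra).
  rewrite Rabs_pos_eq.
  - apply Rmult_lt_reg_l with (1 - a); [lra|].
    replace ((1 - a) * (2 * (/ (1 - a) * Rpower x (1 - a)))) with (2 * Rpower x (1 - a))
      by (field; lra). nra.
  - nra.
Qed.

Lemma limP_comp0 a P g : 0 < a < 1 -> limP P g 0 ->
  (exists d0, 0 < d0 /\ forall t, P d0 t -> 0 < g t) ->
  (forall d d' t, d <= d' -> P d t -> P d' t) ->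
  limP P (fun t => 2 * Psi a (g t)) 0.
Proof.
  intros Ha Hg [d0 [Hd0 Hp]] Hm eps He.
  destruct (Psi0 a Ha eps He) as [d1 [Hd1 H1]].
  destruct (Hg d1 Hd1) as [d [Hd H]].
  exists (Rmin d d0); split; [apply Rmin_pos; auto|].
  intros t Ht. rewrite Rminus_0_r. apply H1.
  assert (A := H t (Hm _ _ _ (Rmin_l d d0) Ht)).
  assert (B := Hp t (Hm _ _ _ (Rmin_r d d0) Ht)).
  rewrite Rminus_0_r in A. rewrite Rabs_pos_eq in A; lra.
Qed.

Lemma cons_pos a (f df : R -> R) : 0 < a < 1 ->
  (forall t, 0 < t -> is_derive f t (df t)) ->
  (forall t, 0 < t -> continuous df t) ->
  forall x y, 0 < x -> x <= y -> (forall s, x <= s <= y -> 0 < f s) ->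
  is_RInt (fun s => -2 * df s * psi a (Rabs (f s))) x y (df y - df x) ->
  df y + 2 * Psi a (f y) = df x + 2 * Psi a (f x).
Proof.
  intros Ha Hd Hc x y Hx Hxy Hpos HI.
  assert (H1 : is_RInt (fun s => -2 * df s * Rpower (f s) (- a)) x y
               (minus (-2 * Psi a (f y)) (-2 * Psi a (f x)))).
  { apply (is_RInt_derive (fun s => -2 * Psi a (f s))).
    - intros s Hs. rewrite Rmin_left in Hs by lra. rewrite Rmax_right in Hs by lra.
      replace (-2 * df s * Rpower (f s) (- a)) with (-2 * (df s * Rpower (f s) (-a))) by ring.
      apply is_derive_scal.
      apply (is_derive_comp (Psi a) f s (Rpower (f s) (-a)) (df s)).
      + apply Psi_deriv; [auto| apply Hpos; lra].
      + apply Hd; lra.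
    - intros s Hs. rewrite Rmin_left in Hs by lra. rewrite Rmax_right in Hs by lra.
      apply (continuous_mult (fun s => -2 * df s) (fun s => Rpower (f s) (-a))).
      + apply (continuous_mult (fun _ => -2) df). apply continuous_const. apply Hc; lra.
      + apply (continuous_comp f (fun y => Rpower y (-a))).
        * apply (ex_derive_continuous (K:=R_AbsRing) (V:=R_NormedModule)).
          eexists; apply Hd; lra.
        * apply Rpower_cont. apply Hpos; lra. }
  assert (H2 : is_RInt (fun s => -2 * df s * psi a (Rabs (f s))) x y
               (minus (-2 * Psi a (f y)) (-2 * Psi a (f x)))).
  { refine (is_RInt_ext _ _ _ _ _ _ H1).
    intros s Hs. rewrite Rmin_left in Hs by lra. rewrite Rmax_right in Hs by lra.
    assert (P := Hpos s ltac:(lra)). unfold psi. rewrite Rabs_pos_eq by lra.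
    destruct (Rlt_dec 0 (f s)); [reflexivity | lra]. }
  apply (is_RInt_unique (V:=R_CompleteNormedModule)) in HI. apply (is_RInt_unique (V:=R_CompleteNormedModule)) in H2.
  rewrite HI in H2. unfold minus, plus, opp in H2; simpl in H2. lra.
Qed.

Lemma first_zero (f : R -> R) u B : 0 < f u -> limP (RR u) f (f u) ->
  (forall t, u < t -> contAt f t) ->
  (forall t, u <= t -> (forall s, u <= s <= t -> 0 < f s) -> t <= B) ->
  exists t1, u < t1 /\ f t1 = 0 /\ forall s, u <= s < t1 -> 0 < f s.
Proof.
  intros Hu Hr Hc HB.
  set (E := fun t => u <= t /\ forall s, u <= s <= t -> 0 < f s).
  assert (Eb : bound E) by (exists B; intros t [H1 H2]; apply HB; auto).
  assert (Eu : E u) by (split; [lra| intros s Hs; replace s with u by lra; auto]).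
  destruct (completeness E Eb (ex_intro _ u Eu)) as [m [Hub Hlub]].
  destruct (Hr (f u) Hu) as [d [Hd Hdf]].
  assert (Hm : u + d / 2 <= m).
  { apply Hub. split; [lra|]. intros s Hs.
    destruct (Req_dec s u) as [->|n]; auto.
    assert (A := Hdf s ltac:(unfold RR; lra)).
    apply Rabs_def2 in A. lra. }
  assert (Hb : forall s, u <= s < m -> 0 < f s).
  { intros s Hs. destruct (Rlt_le_dec 0 (f s)) as [|Hn]; auto. exfalso.
    assert (m <= s); [|lra]. apply Hlub. intros t [Ht1 Ht2].
    destruct (Rlt_le_dec s t); [|lra]. assert (A := Ht2 s ltac:(lra)). lra. }
  exists m. split; [lra|]. split; [|auto].
  destruct (Rtotal_order (f m) 0) as [Hneg|[Hz|Hposm]]; auto; exfalso.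
  - destruct (Hc m ltac:(lra) (- f m) ltac:(lra)) as [d1 [Hd1 H1]].
    set (s := Rmax u (m - d1 / 2)).
    assert (s1 : u <= s) by apply Rmax_l. assert (s2 : m - d1/2 <= s) by apply Rmax_r.
    assert (s3 : s < m) by (unfold s; apply Rmax_lub_lt; lra).
    assert (A := H1 s ltac:(rewrite Rabs_left; lra)).
    apply Rabs_def2 in A. assert (Bb := Hb s ltac:(lra)). lra.
  - destruct (Hc m ltac:(lra) (f m) Hposm) as [d1 [Hd1 H1]].
    assert (m + d1 / 2 <= m); [|lra].
    apply Hub. split; [lra|]. intros s Hs.
    destruct (Rlt_le_dec s m); [apply Hb; lra|].
    assert (A := H1 s ltac:(rewrite Rabs_pos_eq; lra)). apply Rabs_def2 in A. lra.
Qed.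

Lemma sign_left_pos f z l d0 : derivable_pt_lim f z l -> f z = 0 -> 0 < d0 ->
  (forall s, z - d0 < s < z -> 0 < f s) -> l <= 0.
Proof.
  intros H Hz Hd0 Hp. destruct (Rle_lt_dec l 0) as [|Hl]; auto. exfalso.
  destruct (H l Hl) as [[dl Hdl] Hf]. simpl in Hf.
  set (h := - (Rmin dl d0 / 2)).
  assert (Hm := Rmin_pos dl d0 Hdl Hd0).
  assert (Hm1 := Rmin_l dl d0). assert (Hm2 := Rmin_r dl d0).
  assert (A := Hf h ltac:(unfold h; lra) ltac:(unfold h; rewrite Rabs_left; lra)).
  rewrite Hz, Rminus_0_r in A. apply Rabs_def2 in A.
  assert (B := Hp (z + h) ltac:(unfold h; lra)).
  assert (C : / h < 0) by (apply Rinv_lt_0_compat; unfold h; lra).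
  unfold Rdiv in A. nra.
Qed.

Lemma sign_left_neg f z l d0 : derivable_pt_lim f z l -> f z = 0 -> 0 < d0 ->
  (forall s, z - d0 < s < z -> f s < 0) -> 0 <= l.
Proof.
  intros H Hz Hd0 Hp.
  assert (H' := derivable_pt_lim_opp f z l H).
  assert (- l <= 0); [|lra].
  apply (sign_left_pos (- f)%F z (- l) d0 H'); unfold opp_fct.
  - rewrite Hz; ring.
  - auto.
  - intros s Hs; assert (A := Hp s Hs); lra.
Qed.

Lemma right_neg f z l : derivable_pt_lim f z l -> f z = 0 -> l < 0 ->
  exists d, 0 < d /\ forall h, 0 < h < d -> f (z + h) < 0.
Proof.
  intros H Hz Hl. destruct (H (- l) ltac:(lra)) as [[dl Hdl] Hf]. simpl in Hf.
  exists dl; split; auto. intros h Hh.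
  assert (A := Hf h ltac:(lra) ltac:(rewrite Rabs_pos_eq; lra)).
  rewrite Hz, Rminus_0_r in A. apply Rabs_def2 in A.
  assert (E : f (z + h) = f (z + h) / h * h) by (field; lra).
  rewrite E. nra.
Qed.

Lemma contAt_opp f x : contAt f x -> contAt (fun s => - f s) x.
Proof. intros H eps He; destruct (H eps He) as [d [Hd Hf]]; exists d; split; auto.
  intros t Ht. replace (- f t - - f x) with (- (f t - f x)) by ring. rewrite Rabs_Ropp; auto. Qed.

Theorem proposition3p1 (alpha : R) (phi dphi : R -> R) :
  0 < alpha < 1 ->
  CS_solution alpha phi dphi ->
  0 < phi 0 ->
  ((exists t0 : R, 0 <= t0 /\ phi t0 = 0 /\ dphi t0 = 0) <->
   dphi 0 = -2 * Psi alpha (phi 0)).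
Proof.
  intros Ha [[Hd [Hq Hc]] [Hint Hstick]] H0.
  assert (Cd : forall t, 0 < t -> continuous dphi t).
  { intros t Ht. eapply filterlim_filter_le_1; [|apply (Hc t); lra].
    intros P [e He]. exists (mkposreal _ (Rmin_pos _ _ (cond_pos e) Ht)).
    intros y Hy. change (Rabs (y - t) < Rmin e t) in Hy.
    assert (A1 := Rmin_l e t). assert (A2 := Rmin_r e t).
    apply He. change (Rabs (y - t) < e). lra.
    apply Rabs_def2 in Hy. lra. }
  assert (Cp : forall t, 0 < t -> continuous phi t).
  { intros t Ht. apply (ex_derive_continuous (K:=R_AbsRing) (V:=R_NormedModule)).
    eexists; apply Hd; auto. }
  assert (Cd' : forall t, 0 < t -> contAt dphi t) by (intros; apply cont_contAt; auto).
  assert (Cp' : forall t, 0 < t -> contAt phi t) by (intros; apply cont_contAt; auto).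
  assert (R0p : limP (RR 0) phi (phi 0)).
  { destruct (proj1 (filterlim_locally _ _) Hq (mkposreal 1 Rlt_0_1)) as [e He].
    intros eps Heps.
    assert (Hk : 0 < Rabs (dphi 0) + 1) by (assert (B := Rabs_pos (dphi 0)); lra).
    assert (Hq' : 0 < eps / (Rabs (dphi 0) + 1)) by (apply Rdiv_lt_0_compat; lra).
    exists (Rmin e (eps / (Rabs (dphi 0) + 1))). split; [apply Rmin_pos; auto; apply cond_pos|].
    intros t [Ht1 Ht2]. assert (A1 := Rmin_l e (eps / (Rabs (dphi 0) + 1))).
    assert (A2 := Rmin_r e (eps / (Rabs (dphi 0) + 1))).
    assert (A := He t ltac:(change (Rabs (t - 0) < e); rewrite Rabs_pos_eq; lra) ltac:(lra)).
    change (Rabs ((phi t - phi 0) / t - dphi 0) < 1) in A.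
    set (q := (phi t - phi 0) / t) in *.
    assert (E : phi t - phi 0 = q * t) by (unfold q; field; lra).
    rewrite E, Rabs_mult, (Rabs_pos_eq t) by lra.
    assert (B : Rabs q < Rabs (dphi 0) + 1).
    { replace q with ((q - dphi 0) + dphi 0) by ring.
      eapply Rle_lt_trans; [apply Rabs_triang|]. lra. }
    assert (C : t < eps / (Rabs (dphi 0) + 1)) by lra.
    apply (Rmult_lt_compat_l (Rabs (dphi 0) + 1)) in C; [|lra].
    replace ((Rabs (dphi 0) + 1) * (eps / (Rabs (dphi 0) + 1))) with eps in C by (field; lra).
    assert (D0 := Rabs_pos q). nra. }
  assert (R0d : limP (RR 0) dphi (dphi 0)).
  { intros eps Heps.
    destruct (proj1 (filterlim_locally _ _) (Hc 0 (Rle_refl 0)) (mkposreal eps Heps)) as [e He].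
    exists e; split; [apply cond_pos|]. intros t [Ht1 Ht2].
    apply (He t). change (Rabs (t - 0) < e); rewrite Rabs_pos_eq; lra. lra. }
  set (C1 := dphi 0 + 2 * Psi alpha (phi 0)).
  set (G := fun s => dphi s + 2 * Psi alpha (phi s)).
  assert (Gconst : forall T, 0 < T -> (forall s, 0 <= s < T -> 0 < phi s) ->
                   forall t, 0 < t < T -> G t = C1).
  { intros T HT Hp t Ht.
    apply (limRR_uniq G 0 C1 (G t) t).
    - apply (limP_plus (RR 0) dphi (fun s => (fun y => 2 * Psi alpha y) (phi s))); [apply RR_mono| |].
      + exact R0d.
      + apply (limP_comp (RR 0) phi (fun y => 2 * Psi alpha y) (phi 0) R0p). apply PsiC; auto.
    - lra.
    - intros s Hs. symmetry. unfold G.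
      apply (cons_pos alpha phi dphi Ha Hd Cd s t); try lra.
      + intros s' Hs'; apply Hp; lra.
      + apply Hint; try lra. intros s' Hs'. assert (A := Hp s' ltac:(lra)). lra. }
  assert (Dt1 : forall t1, 0 < t1 -> phi t1 = 0 -> (forall s, 0 <= s < t1 -> 0 < phi s) ->
                dphi t1 = C1).
  { intros t1 Ht1 Hz Hp.
    assert (L : limP (LL t1) G (dphi t1 + 0)).
    { apply (limP_plus (LL t1) dphi (fun s => 2 * Psi alpha (phi s))); [apply LL_mono| |].
      - apply contAt_LL; auto.
      - apply (limP_comp0 alpha (LL t1) phi); auto; [| |apply LL_mono].
        + rewrite <- Hz. apply contAt_LL; auto.
        + exists t1; split; auto. intros s [Hs1 Hs2]; apply Hp; lra. }
    assert (E := limLL_uniq G t1 (dphi t1 + 0) C1 t1 L Ht1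
                  ltac:(intros s Hs; apply (Gconst t1); auto; lra)). lra. }
  split.
  - intros [t0 [Ht0 [Hp0 Hd0]]].
    destruct (first_zero phi 0 t0 H0 R0p Cp') as [t1 [Ht1 [Hz Hp]]].
    { intros t Ht Hp. destruct (Rle_lt_dec t t0); auto.
      assert (A := Hp t0 ltac:(lra)). lra. }
    assert (Ht10 : t1 <= t0).
    { destruct (Rle_lt_dec t1 t0); auto. assert (A := Hp t0 ltac:(lra)). lra. }
    assert (E1 := Dt1 t1 Ht1 Hz Hp).
    destruct (Rtotal_order C1 0) as [Hneg|[Hz0|Hpos]].
    + exfalso.
      assert (Hlt : t1 < t0).
      { destruct (Req_dec t1 t0) as [->|]; [lra|lra]. }
      destruct (right_neg phi t1 (dphi t1) (proj1 (is_derive_Reals _ _ _) (Hd t1 Ht1)) Hz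
                  ltac:(lra)) as [d [Hdp Hr]].
      assert (M1 := Rmin_l d (t0 - t1)). assert (M2 := Rmin_r d (t0 - t1)).
      assert (M0 := Rmin_pos d (t0 - t1) Hdp ltac:(lra)).
      set (u := t1 + Rmin d (t0 - t1) / 2).
      assert (Neg1 : forall s, t1 < s <= u -> phi s < 0).
      { intros s Hs. replace s with (t1 + (s - t1)) by ring. apply Hr. unfold u in Hs; lra. }
      destruct (first_zero (fun s => - phi s) u t0) as [t2 [Ht2 [Hz2 Hp2]]].
      * assert (A := Neg1 u ltac:(unfold u; lra)). lra.
      * apply (contAt_RR (fun s => - phi s)). apply (contAt_opp phi). apply Cp'. unfold u; lra.
      * intros t Ht. apply (contAt_opp phi). apply Cp'. unfold u in Ht; lra.
      * intros t Ht Hp'. destruct (Rle_lt_dec t t0); auto.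
        assert (A := Hp' t0 ltac:(unfold u; lra)). lra.
      * assert (Neg : forall s, t1 < s < t2 -> phi s < 0).
        { intros s Hs. destruct (Rle_lt_dec s u). apply Neg1; lra.
          assert (A := Hp2 s ltac:(lra)). lra. }
        set (H := fun s => dphi s + - (2 * Psi alpha (- phi s))).
        assert (consN : forall x y, t1 < x -> x <= y -> y < t2 -> H y = H x).
        { intros x y Hx Hxy Hy.
          assert (A := cons_pos alpha (fun s => - phi s) (fun s => - dphi s) Ha).
          assert (B : - dphi y + 2 * Psi alpha (- phi y) = - dphi x + 2 * Psi alpha (- phi x)).
          { apply A; try lra.
            - intros t Ht. apply (is_derive_opp phi t (dphi t)). auto.
            - intros t Ht. apply (continuous_opp dphi). auto.
            - intros s Hs. assert (N := Neg s ltac:(lra)). lra.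
            - assert (I := Hint x y ltac:(lra) Hxy
                 ltac:(intros s Hs; assert (N := Neg s ltac:(lra)); lra)).
              apply (is_RInt_opp (V:=R_NormedModule)) in I.
              assert (E : - dphi y - - dphi x = opp (dphi y - dphi x))
                by (unfold opp; simpl; ring).
              rewrite E. refine (is_RInt_ext _ _ _ _ _ _ I).
              intros s _. rewrite Rabs_Ropp. unfold opp; simpl; ring. }
          unfold H. lra. }
        set (b := (t1 + t2) / 2).
        assert (Hu1 : t1 < u) by (unfold u; lra).
        assert (L1 : limP (RR t1) H (dphi t1 + - 0)).
        { apply (limP_plus (RR t1) dphi (fun s => - (2 * Psi alpha (- phi s)))); [apply RR_mono| |].
          - apply contAt_RR; auto.
          - apply (limP_opp _ (fun s => 2 * Psi alpha (- phi s))).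
            apply (limP_comp0 alpha (RR t1) (fun s => - phi s)); auto; [| |apply RR_mono].
            + replace 0 with (- phi t1) by lra. apply (contAt_RR (fun s => - phi s)). apply (contAt_opp phi); auto.
            + exists (t2 - t1); split; [lra|]. intros s [Hs1 Hs2].
              assert (N := Neg s ltac:(lra)). lra. }
        assert (Hb0 : 0 < b - t1) by (unfold b; lra).
        assert (K1 := limRR_uniq H t1 _ (H b) (b - t1) L1 Hb0
                  ltac:(intros s Hs; symmetry; apply consN; unfold b in *; lra)).
        assert (L2 : limP (LL t2) H (dphi t2 + - 0)).
        { apply (limP_plus (LL t2) dphi (fun s => - (2 * Psi alpha (- phi s)))); [apply LL_mono| |].
          - apply contAt_LL; apply Cd'; lra.
          - apply (limP_opp _ (fun s => 2 * Psi alpha (- phi s))).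
            apply (limP_comp0 alpha (LL t2) (fun s => - phi s)); auto; [| |apply LL_mono].
            + rewrite <- Hz2. apply (contAt_LL (fun s => - phi s)). apply (contAt_opp phi); apply Cp'; lra.
            + exists (t2 - t1); split; [lra|]. intros s [Hs1 Hs2].
              assert (N := Neg s ltac:(lra)). lra. }
        assert (K2 := limLL_uniq H t2 _ (H b) (t2 - b) L2 ltac:(unfold b; lra)
                  ltac:(intros s Hs; apply consN; unfold b in *; lra)).
        assert (Ssg := sign_left_neg phi t2 (dphi t2) (t2 - t1)
                      (proj1 (is_derive_Reals _ _ _) (Hd t2 ltac:(lra))) ltac:(lra)
                      ltac:(lra) ltac:(intros s Hs; apply Neg; lra)).
        lra.
    + unfold C1 in Hz0. lra.
    + exfalso.
      assert (Ssg := sign_left_pos phi t1 (dphi t1) t1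
                    (proj1 (is_derive_Reals _ _ _) (Hd t1 Ht1)) Hz Ht1
                    ltac:(intros s Hs; apply Hp; lra)).
      lra.
  - intros Heq.
    assert (HC : C1 = 0) by (unfold C1; lra).
    set (k := 2 * alpha / (1 - alpha)).
    assert (Hk : 0 < k) by (unfold k; apply Rdiv_lt_0_compat; lra).
    set (T0 := Rpower (phi 0) alpha / k).
    assert (HT0 : 0 < T0) by (unfold T0; apply Rdiv_lt_0_compat; auto; apply Rpower_pos).
    assert (Bound : forall t, 0 <= t -> (forall s, 0 <= s <= t -> 0 < phi s) -> t <= T0).
    { intros t Ht Hp. destruct (Rle_lt_dec t T0) as [|Hlt]; auto. exfalso.
      assert (Gs : forall s, 0 < s < t -> dphi s = -2 * Psi alpha (phi s)).
      { intros s Hs. assert (A := Gconst t ltac:(lra) ltac:(intros s' Hs'; apply Hp; lra) s Hs).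
        unfold G in A. lra. }
      set (Q := fun s => Rpower (phi s) alpha + k * s).
      assert (QD : forall s, 0 < s < t -> is_derive Q s 0).
      { intros s Hs.
        assert (P1 : is_derive (fun s => Rpower (phi s) alpha) s
                       (dphi s * (alpha * Rpower (phi s) (alpha - 1)))).
        { apply (is_derive_comp (fun y => Rpower y alpha) phi s).
          - apply Rpower_deriv. apply Hp; lra.
          - apply Hd; lra. }
        assert (P2 : is_derive (fun s => k * s) s (k * 1)).
        { apply is_derive_scal. apply (is_derive_id (K:=R_AbsRing)). }
        assert (E : dphi s * (alpha * Rpower (phi s) (alpha - 1)) + k * 1 = 0).
        { rewrite Gs by lra. unfold Psi.
          assert (R : Rpower (phi s) (1 - alpha) * Rpower (phi s) (alpha - 1) = 1).
          { rewrite <- Rpower_plus. replace (1 - alpha + (alpha - 1)) with 0 by ring.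
            apply Rpower_O. apply Hp; lra. }
          unfold k.
          replace (-2 * (/ (1 - alpha) * Rpower (phi s) (1 - alpha)) *
                   (alpha * Rpower (phi s) (alpha - 1)))
            with (- (2 * alpha / (1 - alpha)) *
                  (Rpower (phi s) (1 - alpha) * Rpower (phi s) (alpha - 1)))
            by (field; lra).
          rewrite R. ring. }
        rewrite <- E. apply (is_derive_plus (fun s => Rpower (phi s) alpha) (fun s => k * s));
          auto. }
      assert (QC : forall s1 s2, 0 < s1 -> s1 <= s2 -> s2 < t -> Q s2 = Q s1).
      { intros s1 s2 H1 H2 H3.
        destruct (MVT_gen Q s1 s2 (fun _ => 0)) as [c [Hc1 Hc2]].
        - intros x Hx. rewrite Rmin_left in Hx by lra. rewrite Rmax_right in Hx by lra.
          apply QD; lra.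
        - intros x Hx. rewrite Rmin_left in Hx by lra. rewrite Rmax_right in Hx by lra.
          apply derivable_continuous_pt.
          exists 0. apply (proj1 (is_derive_Reals _ _ _)). apply QD; lra.
        - lra. }
      assert (LQ : limP (RR 0) Q (Rpower (phi 0) alpha + k * 0)).
      { apply (limP_plus (RR 0) (fun s => (fun y => Rpower y alpha) (phi s)) (fun s => k * s));
          [apply RR_mono| |].
        - apply (limP_comp (RR 0) phi (fun y => Rpower y alpha) (phi 0) R0p). apply cont_contAt. apply Rpower_cont; auto.
        - apply (contAt_RR (fun s => k * s)). apply cont_contAt.
          apply (ex_derive_continuous (K:=R_AbsRing) (V:=R_NormedModule)).
          eexists. apply is_derive_scal. apply (is_derive_id (K:=R_AbsRing)). }
      assert (K := limRR_uniq Q 0 _ (Q T0) T0 LQ HT0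
                     ltac:(intros s Hs; symmetry; apply QC; lra)).
      unfold Q in K.
      assert (E : k * T0 = Rpower (phi 0) alpha) by (unfold T0; field; lra).
      assert (Pp := Rpower_pos (phi T0) alpha). lra. }
    destruct (first_zero phi 0 T0 H0 R0p Cp' Bound) as [t1 [Ht1 [Hz Hp]]].
    exists t1. split; [lra|]. split; auto.
    rewrite (Dt1 t1 Ht1 Hz Hp). auto.
Qed.
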